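(* Let $G$ be a profinite group whose set of coprime commutators has cardinality less than $2^{\aleph_0}$. Let $x\in G$ and let $H$ be a (closed) subgroup of $G$ such that $\pi(x)\cap\pi(H)=\emptyset$. Then the centralizer $C_H(x)$ has finite index in $H$.
   Context: For an element $x$ of a profinite group, $\pi(x)$ denotes the set of primes dividing the order of the procyclic subgroup $\overline{\langle x\rangle}$; for a profinite group $H$, $\pi(H)$ is the set of primes dividing its order (a Steinitz number). A coprime commutator in a profinite group $G$ is an element $[x,y]$ with $x,y\in G$ and $\pi(x)\cap\pi(y)=\emptyset$. *)

(* Defs.v *)
From mathcomp Require Import all_boot all_order.
From mathcomp Require Import classical_sets boolp cardinality.
From mathcomp Require Import topology.
Set Implicit Arguments. Unset Strict Implicit. Unset Printing Implicit Defensive.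
Local Open Scope classical_set_scope.

Section ProfiniteDefs.
Variables (G : topologicalType) (mul : G -> G -> G) (inv : G -> G) (one : G).

Definition group_axioms :=
  [/\ forall x y z, mul x (mul y z) = mul (mul x y) z,
      forall x, mul one x = x,
      forall x, mul x one = x,
      forall x, mul (inv x) x = one &
      forall x, mul x (inv x) = one].

Definition is_profinite_group :=
  [/\ group_axioms,
      continuous (fun p : G * G => mul p.1 p.2) /\ continuous inv,
      compact [set: G],
      hausdorff_space G &
      totally_disconnected [set: G]].

Definition is_subgroup (H : set G) :=
  [/\ H one, forall x y, H x -> H y -> H (mul x y) & forall x, H x -> H (inv x)].

Definition closed_subgroup (H : set G) := is_subgroup H /\ closed H.

Definition normal_sub (U H : set G) :=
  [/\ is_subgroup U, U `<=` H & forall h u, H h -> U u -> U (mul (inv h) (mul u h))].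

(* U is a subgroup of H with [H : U] = n : the left cosets (nth one s i) U,
   i < size s, partition H. *)
Definition index_is (H U : set G) (n : nat) :=
  exists s : seq G, size s = n /\ (forall i, (i < size s)%N -> H (nth one s i)) /\
    forall h, H h -> exists! i : nat, (i < size s)%N /\ U (mul (inv (nth one s i)) h).

Definition finite_index (H U : set G) := exists n, index_is H U n.

(* pi(H) for a closed subgroup H: the primes dividing the Steinitz number |H|,
   i.e. the primes dividing [H : U] for some open normal subgroup U of H
   (open in the subspace topology of H). *)
Definition pi_set (H : set G) (p : nat) :=
  prime p /\ exists U : set G, [/\ exists O : set G, open O /\ U = H `&` O,
     normal_sub U H & exists n, index_is H U n /\ (p %| n)%N].

Definition cyc (x : G) : set G :=
  [set z | exists n : nat, z = iter n (mul x) one \/ z = inv (iter n (mul x) one)].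

Definition pi_elt (x : G) (p : nat) := pi_set (closure (cyc x)) p.

Definition comm (x y : G) := mul (inv x) (mul (inv y) (mul x y)).

Definition coprime_commutators : set G :=
  [set z | exists x y, (forall p, ~ (pi_elt x p /\ pi_elt y p)) /\ z = comm x y].

Definition centralizer_in (H : set G) (x : G) : set G :=
  [set h | H h /\ mul h x = mul x h].

End ProfiniteDefs.

(* Main.v *)
From HB Require Import structures.
Require Import Defs.
From mathcomp Require Import all_boot all_order finmap.
From mathcomp Require Import classical_sets boolp cardinality.
From mathcomp Require Import topology.
Set Implicit Arguments. Unset Strict Implicit. Unset Printing Implicit Defensive.
Local Open Scope classical_set_scope.
Local Open Scope card_scope.

Lemma fip (T : topologicalType) (K : set T) (I : Type) (D : set I) (B : I -> set T) :
  compact K -> (exists i, D i) ->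
  (forall i j, D i -> D j -> exists2 k, D k & B k `<=` B i `&` B j) ->
  (forall i, D i -> [/\ closed (B i), B i `<=` K & B i !=set0]) ->
  exists x, forall i, D i -> B i x.
Proof.
move=> cK [i0 Di0] dir hB.
have FF : ProperFilter (filter_from D B).
  apply: filter_from_proper; first by apply: filter_from_filter => //; exists i0.
  by move=> i /hB [].
have [|p [Kp clp]] := cK _ FF.
  by exists i0 => //; have [] := hB _ Di0.
exists p => i Di; have [cl _ _] := hB _ Di.
rewrite clusterE in clp; apply: cl; apply: clp; exists i => //.
Qed.

Section ZD.
Variable (T : topologicalType).
Hypotheses (cT : compact [set: T]) (hT : hausdorff_space T).
Variable x0 : T.
Let CL := [set W : set T | clopen W /\ W x0].
Let Q := \bigcap_(W in CL) W.

Lemma Q_sub (O : set T) : open O -> Q `<=` O -> exists W, CL W /\ W `<=` O.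
Proof.
move=> oO QO; apply: contrapT => nW.
have [|||y hy] := @fip T setT (set T) CL (fun W => W `&` ~` O) cT.
- by exists setT; split => //; split; [apply: openT | apply: closedT].
- move=> W1 W2 [[o1 c1] h1] [[o2 c2] h2]; exists (W1 `&` W2).
    by split; [split; [apply: openI | apply: closedI] | split].
  by move=> z [[? ?] ?]; split; split.
- move=> W [[oW cW] hW]; split => //.
    by apply: closedI => //; apply: open_closedC.
  apply: contrapT => /set0P/negP; rewrite negbK => /eqP e.
  apply: nW; exists W; split => //; move=> z Wz; apply: contrapT => nO.
  by have : (W `&` ~` O) z by []; rewrite e.
have Qy : Q y by move=> W /hy [].
have : CL setT by split => //; split; [apply: openT | apply: closedT].
by move=> /hy [_]; apply; apply: QO.
Qed.

Lemma Q_closed : closed Q.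
Proof. by apply: closed_bigI => W [[]]. Qed.

Lemma Q_connected : connected Q.
Proof.
move=> B [b Bb] [C1 oC1 eB1] [C2 cC2 eB2].
set A1 := Q `&` C2; set A2 := Q `&` ~` C1.
have cA1 : closed A1 by apply: closedI => //; apply: Q_closed.
have cA2 : closed A2 by apply: closedI; [apply: Q_closed | apply: open_closedC].
have A12 : forall z, A1 z -> A2 z -> False.
  by move=> z h1 [_ nz]; move: h1; rewrite /A1 -eB2 eB1 => -[].
have [C nC clC] : filter_from (set_nbhs A1) closure (~` A2).
  apply: (@compact_normal T hT cT A1 cA1); apply/set_nbhsP; exists (~` A2); split.
  - exact: closed_openC.
  - by move=> z h1 h2; apply: (A12 z h1 h2).
  - by [].
set U1 := C°; set U2 := ~` closure C.
have oU1 : open U1 by apply: open_interior.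
have oU2 : open U2 by apply: closed_openC; apply: closed_closure.
have A1U1 : A1 `<=` U1 by move=> z /nC.
have A2U2 : A2 `<=` U2 by move=> z h2 hc; exact: (clC z hc h2).
have U12 : forall z, U1 z -> U2 z -> False.
  by move=> z /interior_subset /subset_closure h1; apply.
have QU : Q `<=` U1 `|` U2.
  move=> q Qq; have [h1|h2] := pselect (C1 q).
    left; apply: A1U1; split => //.
    have : B q by rewrite eB1.
    by rewrite eB2 => -[].
  by right; apply: A2U2.
have [W [[[oW cW] W0] WU]] := Q_sub (openU oU1 oU2) QU.
have [b1|nb1] := pselect (U1 x0).
  have CLW : CL (W `&` U1).
    split => //; split; first exact: openI.
    have -> : W `&` U1 = W `&` ~` U2.
      apply/seteqP; split => z [Wz hz]; split => //.
        by move=> h; apply: (U12 z).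
      by have [] := WU z Wz.
    by apply: closedI => //; apply: open_closedC.
  have QU1 : Q `<=` U1 by move=> q Qq; have [] := Qq _ CLW.
  apply/seteqP; split; first by rewrite eB1 => z [].
  move=> q Qq; rewrite eB1; split => //; apply: contrapT => nq.
  exact: (U12 q (QU1 q Qq) (A2U2 q (conj Qq nq))).
have U2x : U2 x0.
  have Qx : Q x0 by move=> W' [].
  by have [] := QU x0 Qx.
have CLW : CL (W `&` U2).
  split => //; split; first exact: openI.
  have -> : W `&` U2 = W `&` ~` U1.
    apply/seteqP; split => z [Wz hz]; split => //.
      by move=> h; apply: (U12 z).
    by have [] := WU z Wz.
  by apply: closedI => //; apply: open_closedC.
have QU2 : Q `<=` U2 by move=> q Qq; have [] := Qq _ CLW.
exfalso; have Bb' := Bb; rewrite eB2 in Bb'.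
by apply: (U12 b (A1U1 b Bb') (QU2 b Bb'.1)).
Qed.

Lemma Q_one : totally_disconnected [set: T] -> Q `<=` [set x0].
Proof.
move=> td q Qq; have Qx : Q x0 by move=> W' [].
rewrite -(td x0 I); exists Q => //; split => //; exact: Q_connected.
Qed.

Lemma clopen_nbhs (O : set T) : totally_disconnected [set: T] -> open O -> O x0 ->
  exists W, [/\ clopen W, W x0 & W `<=` O].
Proof.
move=> td oO Ox; have [|W [[cW Wx] WO]] := Q_sub oO.
  by move=> q /(Q_one td) ->.
by exists W.
Qed.
End ZD.

Fixpoint apx (T : Type) (st : set T * T -> bool -> set T * T) (p0 : set T * T)
  (b : nat -> bool) n := if n is m.+1 then st (apx st p0 b m) (b m) else p0.

Lemma perfect_card (T : topologicalType) (S : set T) :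
  compact [set: T] -> hausdorff_space T -> compact S -> (exists z, S z) ->
  (forall z, S z -> forall N, nbhs z N -> exists z', [/\ S z', z' <> z & N z']) ->
  [set: nat -> bool] #<= S.
Proof.
move=> cT hT cS [z0 Sz0] perf.
have cS' : closed S by apply: compact_closed.
pose good (p : set T * T) := [/\ open p.1, S p.2 & p.1 p.2].
have reg : forall (z : T) (U : set T), nbhs z U -> exists V, [/\ open V, V z & closure V `<=` U].
  move=> z U nU; have nT : nbhs z setT by apply: filterT.
  have := @compact_regular T z setT hT cT nT U nU.
  case=> V nV cVU; exists V°; split.
  - exact: open_interior.
  - exact: nV.
  - by apply: subset_trans cVU; apply: closureS; apply: interior_subset.
have step : forall p : set T * T, exists q : bool -> set T * T, good p ->
   [/\ forall i, good (q i), forall i, closure (q i).1 `<=` p.1 &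
       forall y, (q true).1 y -> (q false).1 y -> False].
  move=> [W z]; have [gp|ngp] := pselect (good (W, z)); last first.
    by exists (fun _ => (W, z)) => /ngp.
  case: gp => /= oW Sz Wz.
  have [z' [Sz' nz Wz']] := perf z Sz W (open_nbhs_nbhs (conj oW Wz)).
  have : z != z' by apply/eqP => e; apply: nz; rewrite e.
  rewrite open_hausdorff in hT; case/hT => -[A B] /= [zA z'B] [oA oB AB0].
  rewrite inE in zA; rewrite inE in z'B.
  have [V0 [oV0 V0z cV0]] := reg z (W `&` A) (open_nbhs_nbhs (conj (openI oW oA) (conj Wz zA))).
  have [V1 [oV1 V1z cV1]] := reg z' (W `&` B) (open_nbhs_nbhs (conj (openI oW oB) (conj Wz' z'B))).
  exists (fun i => if i then (V0, z) else (V1, z')) => _; split.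
  - by case; split.
  - by case => y /= /[dup] h; [move/cV0 => [] | move/cV1 => []].
  - move=> y /= /subset_closure /cV0 [_ hA] /subset_closure /cV1 [_ hB].
    move/eqP: AB0 => e; have : (A `&` B) y by split.
    by rewrite e.
have [st hst] := choice step.
pose p0 := ((setT : set T), z0).
have gp0 : good p0 by split => //; apply: openT.
have gapx : forall b n, good (apx st p0 b n).
  by move=> b; elim=> [|n IH] //=; have [h _ _] := hst _ IH; apply: h.
have capx : forall b n, closure (apx st p0 b n.+1).1 `<=` (apx st p0 b n).1.
  by move=> b n /=; have [_ h _] := hst _ (gapx b n); apply: h.
have mono : forall b n m, n <= m -> (apx st p0 b m).1 `<=` (apx st p0 b n).1.
  move=> b n m /subnK <-; elim: (m - n) => [|k IH] //.
  rewrite addSn; apply: subset_trans IH; apply: subset_trans (capx b (k + n)).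
  exact: subset_closure.
have : forall b, exists y, S y /\ forall n, (apx st p0 b n).1 y.
  move=> b.
  have [|||y hy] := @fip T S nat setT (fun n => S `&` closure (apx st p0 b n).1) cS.
  - by exists 0.
  - move=> i j _ _; exists (maxn i j) => // y [Sy hy]; split; split => //.
      by apply: (closureS (mono b i _ (leq_maxl i j))).
    by apply: (closureS (mono b j _ (leq_maxr i j))).
  - move=> n _; split.
    + by apply: closedI => //; apply: closed_closure.
    + by move=> y [].
    + have [_ h1 h2] := gapx b n; exists (apx st p0 b n).2; split => //.
      exact: subset_closure.
  exists y; split; first by have [] := hy 0 I.
  by move=> n; have [_ h] := hy n.+1 I; apply: capx.
case/choice => phi hphi.
have phiinj : {in [set: nat -> bool] &, injective phi}.
  move=> b b' _ _ e; apply: contrapT => nb.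
  have ex : exists n, b n != b' n.
    apply: contrapT => hn; apply: nb; apply: funext => n.
    by apply/eqP; apply: contrapT => h; apply: hn; exists n; apply/negP.
  pose n := ex_minn ex.
  have [bn nmin] : b n != b' n /\ forall k, b k != b' k -> n <= k.
    by rewrite /n; case: ex_minnP.
  have same : forall k, k <= n -> apx st p0 b k = apx st p0 b' k.
    elim=> [|k IH] hk //=; rewrite IH ?(ltnW hk) //.
    congr st; apply/eqP; apply: contraT => h; have := nmin k h.
    by rewrite leqNgt hk.
  have [_ h1] := hphi b; have [_ h2] := hphi b'.
  have y1 := h1 n.+1; have y2 := h2 n.+1; rewrite /= same // -e in y2 y1.
  have [_ _ dis] := hst _ (gapx b' n).
  move: y1 y2 bn; rewrite /=; case: (b n); case: (b' n) => //= y1 y2 _.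
  + exact: (dis _ y1 y2).
  + exact: (dis _ y2 y1).
have := inj_card_eq phiinj; move/card_eqPle => [_ h].
apply: (card_le_trans h); apply: subset_card_le => y [b _ <-].
by have [] := hphi b.
Qed.

Section Main.
Variables (G : topologicalType) (mul : G -> G -> G) (inv : G -> G) (one : G).
Hypothesis hG : is_profinite_group mul inv one.
Let hax : group_axioms mul inv one. Proof. by case: hG. Qed.


Lemma mulA x y z : mul x (mul y z) = mul (mul x y) z. Proof. by case: hax. Qed.
Lemma mul1g x : mul one x = x. Proof. by case: hax. Qed.
Lemma mulg1 x : mul x one = x. Proof. by case: hax. Qed.
Lemma mulVg x : mul (inv x) x = one. Proof. by case: hax. Qed.
Lemma mulgV x : mul x (inv x) = one. Proof. by case: hax. Qed.
Lemma mulKg x y : mul (inv x) (mul x y) = y. Proof. by rewrite mulA mulVg mul1g. Qed.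
Lemma mulKVg x y : mul x (mul (inv x) y) = y. Proof. by rewrite mulA mulgV mul1g. Qed.
Lemma mulgK x y : mul (mul y x) (inv x) = y. Proof. by rewrite -mulA mulgV mulg1. Qed.
Lemma mulgKV x y : mul (mul y (inv x)) x = y. Proof. by rewrite -mulA mulVg mulg1. Qed.
Lemma mulgI x y z : mul x y = mul x z -> y = z.
Proof. by move=> e; rewrite -(mulKg x y) e mulKg. Qed.
Lemma mulIg x y z : mul y x = mul z x -> y = z.
Proof. by move=> e; rewrite -(mulgK x y) e mulgK. Qed.
Lemma invK x : inv (inv x) = x.
Proof. by apply: (@mulgI (inv x)); rewrite mulgV mulVg. Qed.
Lemma invM x y : inv (mul x y) = mul (inv y) (inv x).
Proof. by apply: (@mulgI (mul x y)); rewrite mulgV -mulA (mulA y) mulgV mul1g mulgV. Qed.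
Lemma inv1 : inv one = one.
Proof. by rewrite -{2}(mulVg one) mulg1. Qed.

Section Sub.
Variable C : set G.
Hypothesis hC : is_subgroup mul inv one C.
Lemma sub1 : C one. Proof. by case: hC. Qed.
Lemma subM a b : C a -> C b -> C (mul a b). Proof. by case: hC => _ h _; apply: h. Qed.
Lemma subV a : C a -> C (inv a). Proof. by case: hC => _ _ h; apply: h. Qed.
Lemma subVr a : C (inv a) -> C a. Proof. by move/subV; rewrite invK. Qed.
Lemma subMV a b : C (mul a b) -> C b -> C a.
Proof. by move=> h1 h2; rewrite -(mulgK b a); apply: subM => //; apply: subV. Qed.
Lemma subVM a b : C (mul a b) -> C a -> C b.
Proof. by move=> h1 h2; rewrite -(mulKg a b); apply: subM => //; apply: subV. Qed.
Definition lrel a b := C (mul (inv a) b).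
Lemma lrel_refl a : lrel a a. Proof. by rewrite /lrel mulVg; apply: sub1. Qed.
Lemma lrel_sym a b : lrel a b -> lrel b a.
Proof. by rewrite /lrel => /subV; rewrite invM invK. Qed.
Lemma lrel_trans a b c : lrel a b -> lrel b c -> lrel a c.
Proof.
by rewrite /lrel => h1 h2; have := subM h1 h2; rewrite -mulA mulKVg.
Qed.
End Sub.

Lemma subI A B : is_subgroup mul inv one A -> is_subgroup mul inv one B ->
  is_subgroup mul inv one (A `&` B).
Proof.
move=> hA hB; split; first by split; apply: sub1.
- by move=> a b [? ?] [? ?]; split; apply: subM.
- by move=> a [? ?]; split; apply: subV.
Qed.


Local Notation lr C := (lrel C).

Lemma fin_aux C (hC : is_subgroup mul inv one C) (s : seq G) : exists r : seq G,
  [/\ (forall i, i < size r -> exists j, j < size s /\ nth one r i = nth one s j),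
      (forall i j, i < size r -> j < size r -> lr C (nth one r i) (nth one r j) -> i = j) &
      (forall j, j < size s -> exists i, i < size r /\ lr C (nth one r i) (nth one s j))].
Proof.
elim: s => [|x s [r [h1 h2 h3]]]; first by exists [::]; split.
have [[i0 [i0r P]]|nP] := pselect (exists i, i < size r /\ lr C (nth one r i) x).
  exists r; split => //.
    by move=> i /h1 [j [js ->]]; exists j.+1.
  by case=> [_|j /h3 [i [? ?]]]; [exists i0 | exists i].
exists (x :: r); split.
- by case=> [_|i /h1 [j [? ?]]]; [exists 0 | exists j.+1].
- case=> [|i] [|j] //=; rewrite !ltnS => hi hj.
  + by move=> h; exfalso; apply: nP; exists j; split => //; apply: lrel_sym.
  + by move=> h; exfalso; apply: nP; exists i.
  + by move=> /h2 -> .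
- case=> [_|j /h3 [i [? ?]]]; first by exists 0; split => //; apply: lrel_refl.
  by exists i.+1.
Qed.

Lemma fin_index_seq A C (s : seq G) : is_subgroup mul inv one C ->
  (forall i, i < size s -> A (nth one s i)) ->
  (forall h, A h -> exists i, i < size s /\ C (mul (inv (nth one s i)) h)) ->
  exists n, index_is mul inv one A C n.
Proof.
move=> hC sA cov; have [r [h1 h2 h3]] := fin_aux hC s.
exists (size r), r; split => //; split.
  by move=> i /h1 [j [js ->]]; apply: sA.
move=> h Ah; have [j [js hj]] := cov h Ah; have [i [ir hi]] := h3 j js.
exists i; split; first by split => //; apply: (lrel_trans hC hi).
move=> k [kr hk]; apply: h2 => //; apply: (lrel_trans hC hi).
by apply: (lrel_trans hC hj); apply: lrel_sym.
Qed.

Lemma fin_index_fam (I : finType) (e : I -> G) A C : is_subgroup mul inv one C ->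
  (forall i, A (e i)) -> (forall h, A h -> exists i, C (mul (inv (e i)) h)) ->
  exists n, index_is mul inv one A C n.
Proof.
move=> hC eA cov; apply: (@fin_index_seq A C [seq e i | i <- enum I]) => //.
  move=> i; rewrite size_map => hi.
  have [x _] : exists x : I, true.
    by move: hi; case: (enum I) => // x; exists x.
  by rewrite (nth_map x) //; apply: eA.
move=> h /cov [i hi]; exists (index i (enum I)).
rewrite size_map index_mem mem_enum; split => //.
by rewrite (nth_map i) ?index_mem ?mem_enum // nth_index ?mem_enum.
Qed.

Lemma index_uniq_le A C n m : is_subgroup mul inv one C ->
  index_is mul inv one A C n -> index_is mul inv one A C m -> n <= m.
Proof.
move=> hC [s [sn [sA su]]] [t [tm [tA tu]]].
have : forall i : 'I_n, exists j : 'I_m, C (mul (inv (nth one t j)) (nth one s i)).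
  move=> i; have hi : i < size s by rewrite sn.
  have [j [[jt hj] _]] := tu _ (sA i hi).
  have jm : j < m by rewrite -tm.
  by exists (Ordinal jm).
case/choice => f hf.
have finj : injective f.
  move=> i i' e; apply: val_inj => /=.
  have hi : i < size s by rewrite sn.
  have hi' : i' < size s by rewrite sn.
  have [k [_ ku]] := su (nth one s i') (sA i' hi').
  have r1 := hf i; have r2 := hf i'; rewrite -e in r2.
  have e1 := ku i (conj hi (lrel_trans hC (lrel_sym hC r1) r2)).
  have e2 := ku i' (conj hi' (lrel_refl hC _)).
  by rewrite -e1 -e2.
by have := leq_card f finj; rewrite !card_ord.
Qed.

Lemma index_uniq A C n m : is_subgroup mul inv one C ->
  index_is mul inv one A C n -> index_is mul inv one A C m -> n = m.
Proof.
by move=> hC h1 h2; apply/eqP; rewrite eqn_leq !(index_uniq_le hC h1 h2, index_uniq_le hC h2 h1).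
Qed.


Lemma idx_uniq A C s h i j :
  (forall h, A h -> exists! i : nat, i < size s /\ C (mul (inv (nth one s i)) h)) ->
  A h -> i < size s -> j < size s -> C (mul (inv (nth one s i)) h) ->
  C (mul (inv (nth one s j)) h) -> i = j.
Proof.
move=> su Ah hi hj ci cj; have [k [_ ku]] := su h Ah.
by rewrite -(ku i (conj hi ci)) -(ku j (conj hj cj)).
Qed.

Lemma index_fam_card (I : finType) (e : I -> G) A C c : is_subgroup mul inv one C ->
  (forall i, A (e i)) -> (forall h, A h -> exists i, C (mul (inv (e i)) h)) ->
  (forall i j, lr C (e i) (e j) -> i = j) ->
  index_is mul inv one A C c -> c = #|I|.
Proof.
move=> hC eA cov eu [s [sc [sA su]]].
have : forall i : I, exists j : 'I_c, C (mul (inv (nth one s j)) (e i)).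
  move=> i; have [j [[js hj] _]] := su _ (eA i).
  have jc : j < c by rewrite -sc.
  by exists (Ordinal jc).
case/choice => f hf.
have : forall j : 'I_c, exists i : I, C (mul (inv (e i)) (nth one s j)).
  by move=> j; apply: cov; apply: sA; rewrite sc.
case/choice => g hg.
have finj : injective f.
  move=> i i' ee; apply: eu; have r1 := hf i; have r2 := hf i'; rewrite -ee in r2.
  exact: (lrel_trans hC (lrel_sym hC r1) r2).
have ginj : injective g.
  move=> j j' ee; apply: val_inj => /=.
  have hj : j < size s by rewrite sc.
  have hj' : j' < size s by rewrite sc.
  have r1 := hg j; have r2 := hg j'; rewrite -ee in r2.
  apply: (@idx_uniq A C s (nth one s j') j j') => //; first by apply: sA.
    exact: (lrel_trans hC (lrel_sym hC r1) r2).
  exact: lrel_refl.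
have := leq_card f finj; have := leq_card g ginj; rewrite !card_ord => h1 h2.
by apply/eqP; rewrite eqn_leq h1 h2.
Qed.

Lemma index_tower A B C a b :
  is_subgroup mul inv one A -> is_subgroup mul inv one B -> is_subgroup mul inv one C ->
  C `<=` B -> B `<=` A ->
  index_is mul inv one A B a -> index_is mul inv one B C b ->
  index_is mul inv one A C (a * b).
Proof.
move=> hA hB hC CB BA [s [sa [sA su]]] [t [tb [tB tu]]].
pose e (p : 'I_a * 'I_b) := mul (nth one s p.1) (nth one t p.2).
have eA : forall p, A (e p).
  move=> [i k]; apply: subM => //; first by apply: sA; rewrite sa.
  by apply: BA; apply: tB; rewrite tb.
have cov : forall h, A h -> exists p, C (mul (inv (e p)) h).
  move=> h Ah; have [i [[si hi] _]] := su h Ah.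
  have [k [[tk hk] _]] := tu _ hi.
  have ia : i < a by rewrite -sa.
  have kb : k < b by rewrite -tb.
  by exists (Ordinal ia, Ordinal kb); rewrite /e /= invM -mulA.
have [c hc] := fin_index_fam hC eA cov.
suff -> : a * b = c by [].
suff einj : forall i j, lr C (e i) (e j) -> i = j.
  by rewrite (index_fam_card hC eA cov einj hc) card_prod !card_ord.
move=> [i k] [j l]; rewrite /lrel /e /= invM -!mulA => h.
have hi : i < size s by rewrite sa.
have hj : j < size s by rewrite sa.
have hk : k < size t by rewrite tb.
have hl : l < size t by rewrite tb.
have Bij : B (mul (inv (nth one s i)) (nth one s j)).
  have h1 : B (mul (mul (inv (nth one t k)) (mul (inv (nth one s i)) (nth one s j))) (nth one t l)).
    by rewrite -!mulA; apply: CB.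
  have h2 := subMV hB h1 (tB _ hl).
  by have := subVM hB h2 (subV hB (tB _ hk)).
have eij : i = j :> nat.
  have jj : B (mul (inv (nth one s j)) (nth one s j)) by rewrite mulVg; apply: sub1.
  exact: (idx_uniq su (sA _ hj) hi hj Bij jj).
have ij : i = j by apply: val_inj.
rewrite ij mulKg in h.
have ekl : k = l :> nat.
  have ll : C (mul (inv (nth one t l)) (nth one t l)) by rewrite mulVg; apply: sub1.
  exact: (idx_uniq tu (tB _ hl) hk hl h ll).
by rewrite ij (val_inj ekl).
Qed.

Lemma index_restrict A B C c :
  is_subgroup mul inv one B -> is_subgroup mul inv one C -> B `<=` A ->
  index_is mul inv one A C c -> exists b, index_is mul inv one B (B `&` C) b.
Proof.
move=> hB hC BA [s [sc [sA su]]].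
have : forall i : 'I_c, exists y, B y /\
   ((exists y', B y' /\ C (mul (inv (nth one s i)) y')) -> C (mul (inv (nth one s i)) y)).
  move=> i; have [[y' [By' Cy']]|nE] :=
    pselect (exists y', B y' /\ C (mul (inv (nth one s i)) y')).
    by exists y'.
  by exists one; split; [apply: sub1 | move=> /nE].
case/choice => g hg.
apply: (@fin_index_fam _ g) => //; first exact: subI.
  by move=> i; case: (hg i).
move=> h Bh; have [i [[si hi] _]] := su h (BA _ Bh).
have ic : i < c by rewrite -sc.
exists (Ordinal ic); have [Bg Cg] := hg (Ordinal ic).
have Cg' := Cg (ex_intro _ h (conj Bh hi)).
split; first by apply: subM => //; apply: subV.
exact: (lrel_trans hC (lrel_sym hC Cg') hi).
Qed.

Lemma index_prodset K D b :
  is_subgroup mul inv one K -> is_subgroup mul inv one D ->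
  index_is mul inv one K (K `&` D) b ->
  index_is mul inv one [set g | exists k, K k /\ D (mul (inv k) g)] D b.
Proof.
move=> hK hD [t [tb [tK tu]]]; exists t; split => //; split.
  by move=> i hi; exists (nth one t i); split; [apply: tK | rewrite mulVg; apply: sub1].
move=> g [k [Kk Dk]]; have [i [[ti [Ki Di]] iu]] := tu k Kk.
exists i; split.
  split => //; have := subM hD Di Dk; by rewrite -mulA mulKVg.
move=> j [tj Dj]; apply: iu; split => //; split.
  by apply: (subM hK); [apply: (subV hK); apply: tK | ].
have := subM hD Dj (subV hD Dk); by rewrite invM invK -mulA mulKVg.
Qed.

Definition pG : Type := G.
HB.instance Definition _ := Topological.on pG.
HB.instance Definition _ := isPointed.Build pG one.
Lemma compact_cov (A : set G) : compact A -> cover_compact A.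
Proof. move=> h; have e := @compact_cover pG; have : @compact pG A by []. rewrite e; exact. Qed.

Lemma cmul : continuous (fun p : G * G => mul p.1 p.2). Proof. by case: hG => _ []. Qed.
Lemma cinv : continuous inv. Proof. by case: hG => _ []. Qed.
Lemma cptG : compact [set: G]. Proof. by case: hG. Qed.
Lemma hsdG : hausdorff_space G. Proof. by case: hG. Qed.
Lemma tdG : totally_disconnected [set: G]. Proof. by case: hG. Qed.

Lemma cont2 (u v : G -> G) : continuous u -> continuous v ->
  continuous (fun g => mul (u g) (v g)).
Proof.
move=> cu cv x; apply: (@continuous2_cvg _ _ _ _ _ _ u v mul) => //.
- exact: (@cmul (u x, v x)).
- exact: cu.
- exact: cv.
Qed.

Lemma ccst (c : G) : continuous (fun _ : G => c).
Proof. by move=> x; apply: cvg_cst. Qed.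

Lemma cid_ : continuous (fun g : G => g).
Proof. by move=> x. Qed.

Lemma cinvf (u : G -> G) : continuous u -> continuous (fun g => inv (u g)).
Proof. by move=> cu x; apply: continuous_comp; [apply: cu | apply: cinv]. Qed.

Lemma open_pre (u : G -> G) (O : set G) : continuous u -> open O -> open [set g | O (u g)].
Proof. by move=> cu oO; apply: (@open_comp _ _ u O) => // x _; apply: cu. Qed.

Lemma cover_fin (H : set G) (O : set G) : compact H -> open O -> O one ->
  (forall h, H h -> mul (inv h) h = one) ->
  exists r : seq G, (forall i, i < size r -> H (nth one r i)) /\
    forall h, H h -> exists i, i < size r /\ O (mul (inv (nth one r i)) h).
Proof.
move=> /compact_cov cH oO O1 hV.
have := cH G H (fun g => [set y | O (mul (inv g) y)]).
case.
- by move=> g _; apply: open_pre => //; apply: cont2; [apply: ccst | apply: cid_].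
- by move=> h Hh; exists h => //=; rewrite hV.
move=> D' sD cov; exists (D' : seq G); split.
  by move=> i hi; have := sD (nth one D' i) (mem_nth one hi); rewrite inE.
move=> h /cov [g /= gD hg]; exists (index g D'); rewrite index_mem nth_index //.
Qed.

Lemma prod_nbhs_split (w b : G) (P : set (G * G)) : nbhs (w, b) P ->
  exists A B, [/\ open A, A w, open B, B b & forall a c, A a -> B c -> P (a, c)].
Proof.
case=> [[A0 B0] /= [nA nB] sP].
exists (A0°), (B0°); split.
- exact: open_interior.
- exact: nA.
- exact: open_interior.
- exact: nB.
by move=> a c /interior_subset ha /interior_subset hc; apply: sP.
Qed.

Lemma open_subgroup (O : set G) : open O -> O one ->
  exists V, [/\ open V, is_subgroup mul inv one V & V `<=` O].
Proof.
move=> oO O1.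
have [W [[oW cW] W1 WO]] := clopen_nbhs cptG hsdG tdG oO O1.
have : forall w, exists AB : set G * set G,
    W w -> [/\ open AB.1, AB.1 w, open AB.2, AB.2 one &
            forall a c, AB.1 a -> AB.2 c -> W (mul a c)].
  move=> w; have [Ww|nW] := pselect (W w); last by exists (setT, setT).
  have : nbhs (w, one) [set p : G * G | W (mul p.1 p.2)].
    apply: (@cmul (w, one)); apply: open_nbhs_nbhs; split => //=.
    by rewrite mulg1.
  case/prod_nbhs_split => A [B [oA Aw oB B1 h]].
  by exists (A, B).
case/choice => AB hAB.
have cW' : compact W.
  by apply: (subclosed_compact cW cptG).
have op0 : forall w, W w -> open (AB w).1 by move=> w /hAB [].
have cov0 : W `<=` cover W (fun w => (AB w).1).
  by move=> w Ww; exists w => //; case: (hAB w Ww).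
have [D' sD cov] := compact_cov cW' op0 cov0.
set N := \bigcap_(w in [set` D']) (AB w).2.
have nN : nbhs one N.
  apply: filter_bigI => w wD; have Ww : W w by have := sD w wD; rewrite inE.
  by have [_ _ o h _] := hAB w Ww; apply: open_nbhs_nbhs.
have WN : forall w n, W w -> N n -> W (mul w n).
  move=> w n Ww Nn; have [v vD hv] := cov w Ww.
  have Wv : W v by have := sD v vD; rewrite inE.
  by have [_ _ _ _ h] := hAB v Wv; apply: h => //; apply: Nn.
set N2 := N° `&` [set g | N° (inv g)].
have oN2 : open N2.
  apply: openI; first exact: open_interior.
  by apply: open_pre; [apply: cinvf; apply: cid_ | apply: open_interior].
have N21 : N2 one.
  by split; [ | rewrite /= inv1]; exact: nN.
have N2V : forall n, N2 n -> N2 (inv n).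
  by move=> n [h1 h2]; split => //=; rewrite invK.
have WN2 : forall w n, W w -> N2 n -> W (mul w n).
  by move=> w n Ww [/interior_subset h _]; apply: WN.
set V := [set g | (forall w, W w -> W (mul w g)) /\ (forall w, W w -> W (mul w (inv g)))].
have VO : V `<=` O by move=> g [h _]; apply: WO; rewrite -(mul1g g); apply: h.
have hV : is_subgroup mul inv one V.
  split.
  - by split => w Ww; rewrite ?inv1 mulg1.
  - move=> g h [g1 g2] [h1 h2]; split => w Ww.
      by rewrite mulA; apply: h1; apply: g1.
    by rewrite invM mulA; apply: g2; apply: h2.
  - by move=> g [g1 g2]; split => //; rewrite invK.
exists V; split => //.
have -> : V = \bigcup_(v in V) [set g | N2 (mul (inv v) g)].
  apply/seteqP; split.
    by move=> v Vv; exists v => //=; rewrite mulVg.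
  move=> g [v [v1 v2] /= hn]; split => w Ww.
    by rewrite -(mulKVg v g) mulA; apply: WN2 => //; apply: v1.
  rewrite -(mulKVg v g) invM mulA; apply: v2; apply: WN2 => //.
  exact: N2V.
apply: bigcup_open => v _; apply: open_pre => //.
by apply: cont2; [apply: ccst | apply: cid_].
Qed.
Lemma closure_subgroup S : is_subgroup mul inv one S -> is_subgroup mul inv one (closure S).
Proof.
move=> hS; split.
- by apply: subset_closure; apply: sub1.
- move=> x y cx cy N nN.
  have : nbhs (x, y) [set p : G * G | N (mul p.1 p.2)] by apply: (@cmul (x, y)).
  case/prod_nbhs_split => A [B [oA Ax oB By h]].
  have [a [Sa Aa]] := cx A (open_nbhs_nbhs (conj oA Ax)).
  have [c [Sc Bc]] := cy B (open_nbhs_nbhs (conj oB By)).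
  by exists (mul a c); split; [apply: subM | apply: h].
- move=> x cx N nN.
  have : nbhs x [set g | N (inv g)] by apply: (@cinv x).
  move=> /cx [a [Sa Na]]; exists (inv a); split => //; exact: subV.
Qed.

Local Notation pw h n := (iter n (mul h) one).

Lemma pwD h m n : pw h (m + n) = mul (pw h m) (pw h n).
Proof.
elim: m => [|m IH]; first by rewrite add0n /= mul1g.
by rewrite addSn /= IH mulA.
Qed.

Lemma cyc_subgroup h : is_subgroup mul inv one (cyc mul inv one h).
Proof.
have mix : forall m n, exists k, mul (pw h m) (inv (pw h n)) = pw h k \/
                                 mul (pw h m) (inv (pw h n)) = inv (pw h k).
  move=> m n; have [le|lt] := leqP n m.
    exists (m - n); left; rewrite -{1}(subnK le) pwD mulgK //.
  exists (n - m); right.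
  by rewrite -{1}(subnK (ltnW lt)) pwD invM mulA mulgV mul1g.
split.
- by exists 0; left.
- move=> x y [m [-> | ->]] [n [-> | ->]].
  + by exists (m + n); left; rewrite pwD.
  + have [k hk] := mix m n; by exists k.
  + have [k hk] := mix n m; exists k.
    have e : mul (inv (pw h m)) (pw h n) = mul (pw h n) (inv (pw h m)).
      apply: (@mulgI (pw h m)); rewrite mulKVg mulA -pwD addnC pwD mulgK //.
    by rewrite e.
  + by exists (n + m); right; rewrite pwD invM.
- by move=> x [m [-> | ->]]; exists m; [right | left] => //; rewrite invK.
Qed.

Lemma cyc_sub H h : is_subgroup mul inv one H -> H h -> cyc mul inv one h `<=` H.
Proof.
move=> hH Hh; have pH : forall n, H (pw h n).
  by elim=> [|n IH]; [apply: sub1 | rewrite /=; apply: subM].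
by move=> z [n [-> | ->]]; [exact: (pH n) | apply: (subV hH); exact: (pH n)].
Qed.
Lemma cconj (a b : G) : continuous (fun g => mul a (mul g b)).
Proof. by apply: cont2; [apply: ccst | apply: cont2; [apply: cid_ | apply: ccst]]. Qed.

Lemma open_conjs (V : set G) (r : seq G) : open V ->
  open [set g | forall i, i < size r -> V (mul (inv (nth one r i)) (mul g (nth one r i)))].
Proof.
move=> oV; elim: r => [|x r IH].
  set A := [set g | _]; have -> : A = setT by apply/seteqP; split => // g _ i.
  exact: openT.
have -> : [set g | forall i, i < size (x :: r) ->
              V (mul (inv (nth one (x :: r) i)) (mul g (nth one (x :: r) i)))] =
  [set g | V (mul (inv x) (mul g x))] `&`
  [set g | forall i, i < size r -> V (mul (inv (nth one r i)) (mul g (nth one r i)))].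
  apply/seteqP; split => g.
    by move=> h; split; [apply: (h 0) | move=> i hi; apply: (h i.+1)].
  by move=> [h1 h2] [|i] //= hi; apply: h2.
by apply: openI => //; apply: open_pre => //; apply: cconj.
Qed.

Lemma pi_sub (H : set G) (h : G) p : closed_subgroup mul inv one H -> H h ->
  pi_elt mul inv one h p -> pi_set mul inv one H p.
Proof.
move=> [hH cH] Hh [pp [U [[O [oO eU]] [hU UK nU] [n [idxn pn]]]]].
set K := closure (cyc mul inv one h) in eU UK nU idxn.
have hK : is_subgroup mul inv one K by apply: closure_subgroup; apply: cyc_subgroup.
have KH : K `<=` H.
  rewrite /K; have -> : H = closure H by apply/closure_id.
  by apply: closureS; apply: cyc_sub.
have O1 : O one by have := sub1 hU; rewrite eU => -[].
have [V [oV hV VO]] := open_subgroup oO O1.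
have cptH : compact H by apply: (subclosed_compact cH cptG).
have [r [rH rcov]] := cover_fin cptH oV (sub1 hV) (fun g _ => mulVg g).
set O2 := [set g | forall i, i < size r -> V (mul (inv (nth one r i)) (mul g (nth one r i)))].
have oO2 : open O2 by apply: open_conjs.
set D := H `&` O2.
have Dfull : forall g k, D g -> H k -> V (mul (inv k) (mul g k)).
  move=> g k [Hg O2g] Hk; have [i [ir hi]] := rcov k Hk.
  set v := mul (inv (nth one r i)) k in hi.
  have -> : k = mul (nth one r i) v by rewrite /v mulKVg.
  have := subM hV (subM hV (subV hV hi) (O2g i ir)) hi.
  by rewrite !invM !mulA.
have hD : is_subgroup mul inv one D.
  split.
  - split; first exact: (sub1 hH).
    by move=> i ir; rewrite mul1g mulVg; apply: sub1.
  - move=> a b [Ha Oa] [Hb Ob]; split; first exact: (subM hH).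
    move=> i ir; have := subM hV (Oa i ir) (Ob i ir).
    by rewrite !mulA mulgK.
  - move=> a [Ha Oa]; split; first exact: (subV hH).
    move=> i ir; have := subV hV (Oa i ir).
    by rewrite !invM invK mulA.
have DH : D `<=` H by move=> g [].
have nD : normal_sub mul inv one D H.
  split => // k g Hk Dg; split.
    by apply: (subM hH); [apply: (subV hH) | apply: (subM hH) => //; apply: DH].
  move=> i ir; have := Dfull g (mul k (nth one r i)) Dg (subM hH Hk (rH i ir)).
  by rewrite !invM !mulA.
have DV : D `<=` V.
  by move=> g Dg; have := Dfull g one Dg (sub1 hH); rewrite inv1 mul1g mulg1.
have KDU : K `&` D `<=` U by move=> g [Kg Dg]; rewrite eU; split => //; apply: VO; apply: DV.
have O21 : O2 one by move=> i ir; rewrite mul1g mulVg; apply: sub1.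
have [r' [r'H r'cov]] := cover_fin cptH oO2 O21 (fun g _ => mulVg g).
have [m idxm] : exists m, index_is mul inv one H D m.
  apply: (@fin_index_seq H D r') => // g Hg; have [j [jr hj]] := r'cov g Hg.
  exists j; split => //; split => //; apply: (subM hH) => //; apply: (subV hH); exact: (r'H j jr).
have [b idxb] := index_restrict hK hD KH idxm.
have hKD : is_subgroup mul inv one (K `&` D) by apply: subI.
have [b' idxb'] := index_restrict hU hKD UK idxb.
have eUKD : U `&` (K `&` D) = K `&` D.
  by apply/seteqP; split => g; [case | move=> hg; split => //; apply: KDU].
rewrite eUKD in idxb'.
have KDsubU : K `&` D `<=` U by [].
have idxnb' := index_tower hK hU hKD KDU UK idxn idxb'.
have eb : b = n * b' by apply: (index_uniq hKD idxb idxnb').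
set E := [set g | exists k, K k /\ D (mul (inv k) g)].
have idxE := index_prodset hK hD idxb.
have hE : is_subgroup mul inv one E.
  split.
  - by exists one; split; [apply: (sub1 hK) | rewrite inv1 mul1g; apply: (sub1 hD)].
  - move=> g1 g2 [k1 [K1 D1]] [k2 [K2 D2]]; exists (mul k1 k2); split; first exact: (subM hK).
    have -> : mul (inv (mul k1 k2)) (mul g1 g2) =
      mul (mul (inv k2) (mul (mul (inv k1) g1) k2)) (mul (inv k2) g2).
      by rewrite invM !mulA mulgK.
    apply: (subM hD) => //; have [_ _ nn] := nD; apply: nn => //; exact: KH.
  - move=> g [k [Kk Dk]]; exists (inv k); split; first exact: (subV hK).
    have -> : mul (inv (inv k)) (inv g) = mul (inv (inv k)) (mul (inv (mul (inv k) g)) (inv k)).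
      by rewrite invK invM invK !mulA mulgK.
    have [_ _ nn] := nD; apply: nn; first by apply: (subV hH); exact: KH.
    exact: (subV hD).
have DE : D `<=` E by move=> g Dg; exists one; split; [apply: (sub1 hK) | rewrite inv1 mul1g].
have EH : E `<=` H.
  move=> g [k [Kk Dk]]; rewrite -(mulKVg k g); apply: (subM hH); first exact: KH.
  exact: DH.
have [a idxa] : exists a, index_is mul inv one H E a.
  case: idxm => s [sm [sH su]].
  apply: (@fin_index_seq H E s) => // g Hg; have [j [[js hj] _]] := su g Hg.
  by exists j; split => //; apply: DE.
have idxab := index_tower hH hE hD DE EH idxa idxE.
split => //; exists D; split.
- by exists O2.
- exact: nD.
- exists (a * b); split => //.
  by apply: dvdn_mull; rewrite eb; apply: dvdn_mulr.
Qed.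
Lemma centr_subgroup H x : is_subgroup mul inv one H ->
  is_subgroup mul inv one (centralizer_in mul H x).
Proof.
move=> hH; split.
- by split; [apply: sub1 | rewrite mul1g mulg1].
- move=> a b [Ha ea] [Hb eb]; split; first exact: (subM hH).
  by rewrite -mulA eb mulA ea -mulA.
- move=> a [Ha ea]; split; first exact: (subV hH).
  have := congr1 (fun y => mul (inv a) (mul y (inv a))) ea.
  by rewrite /= mulgK -mulA mulKg => ->.
Qed.

Lemma comm_eq x a b :
  comm mul inv (inv a) x = comm mul inv (inv b) x ->
  mul (mul (inv b) a) x = mul x (mul (inv b) a).
Proof.
rewrite /comm !invK => e.
have e1 : mul a (mul (inv x) (inv a)) = mul b (mul (inv x) (inv b)).
  by apply: (@mulIg x); rewrite -!mulA.
set c := mul (inv b) a.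
have e2 : mul c (inv x) = mul (inv x) c.
  have := congr1 (fun y => mul (inv b) (mul y a)) e1.
  by rewrite /= /c !mulA mulgKV mulVg mul1g.
have := congr1 (fun y => mul x (mul y x)) e2.
rewrite /= mulgKV (mulA x (mul (inv x) c) x) mulKVg => ->.
by [].
Qed.

Lemma main_aux
  (hcard : ~ ([set: nat -> bool] #<= coprime_commutators mul inv one))
  (x : G) (H : set G) (hH : closed_subgroup mul inv one H)
  (hpi : forall p : nat, ~ (pi_elt mul inv one x p /\ pi_set mul inv one H p)) :
  finite_index mul inv one H (centralizer_in mul H x).
Proof.
have [hHs cH] := hH.
pose f h := comm mul inv (inv h) x.
have fE : f = fun h => mul h (mul (inv x) (mul (inv h) x)).
  by apply: funext => h; rewrite /f /comm invK.
have fcont : continuous f.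
  rewrite fE; apply: cont2; first exact: cid_.
  apply: cont2; first exact: ccst.
  by apply: cont2; [apply: cinvf; apply: cid_ | apply: ccst].
set S := f @` H.
have Scc : S `<=` coprime_commutators mul inv one.
  move=> z [h Hh <-]; exists (inv h), x; split => // p [p1 p2].
  apply: (hpi p); split => //; apply: (pi_sub hH (subV hHs Hh) p1).
have cptH : compact H by apply: (subclosed_compact cH cptG).
have cS : compact S by apply: continuous_compact => //; apply: continuous_subspaceT.
have [perf|nperf] := pselect (forall z, S z -> forall N, nbhs z N ->
                               exists z', [/\ S z', z' <> z & N z']).
  exfalso; apply: hcard; apply: (card_le_trans (perfect_card cptG hsdG cS _ perf)).
    by exists (f one); exists one => //; apply: (sub1 hHs).
  exact: subset_card_le.
have [z0 [N0 [Sz0 nN0 iso]]] : exists z0 N0, [/\ S z0, nbhs z0 N0 &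
    forall z', S z' -> N0 z' -> z' = z0].
  apply: contrapT => hn; apply: nperf => z Sz N nN; apply: contrapT => hz.
  apply: hn; exists z, N; split => // z' Sz' Nz'; apply: contrapT => ne.
  by apply: hz; exists z'.
case: Sz0 => h0 Hh0 fh0.
set O0 := N0°.
have oO0 : open O0 by apply: open_interior.
have O0z : O0 z0 by exact: nN0.
pose P g := [set h | O0 (f (mul h0 (mul (inv g) h)))].
have oP : forall g, H g -> open (P g).
  move=> g _; apply: open_pre => //.
  move=> y; apply: continuous_comp; last exact: fcont.
  have cc := cont2 (@ccst h0) (cont2 (@ccst (inv g)) cid_).
  exact: cc.
have covP : H `<=` cover H P.
  by move=> g Hg; exists g => //; rewrite /P /= mulVg mulg1 fh0.
have [D' sD cov] := compact_cov cptH oP covP.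
apply: (@fin_index_seq H _ D'); first exact: centr_subgroup.
  by move=> i hi; have := sD (nth one D' i) (mem_nth one hi); rewrite inE.
move=> h Hh; have [g gD hg] := cov h Hh.
have Hg : H g by have := sD g gD; rewrite inE.
exists (index g D'); rewrite index_mem nth_index //; split => //.
have Hk : H (mul h0 (mul (inv g) h)).
  by apply: (subM hHs) => //; apply: (subM hHs) => //; apply: (subV hHs).
have e : f (mul h0 (mul (inv g) h)) = f h0.
  rewrite fh0; apply: iso; first by exists (mul h0 (mul (inv g) h)).
  exact: interior_subset.
split; first by apply: (subM hHs) => //; apply: (subV hHs).
have := comm_eq e; by rewrite mulKg.
Qed.
End Main.

Unset Implicit Arguments.

Theorem lemma2p2 (G : topologicalType) (mul : G -> G -> G) (inv : G -> G) (one : G)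
  (hG : is_profinite_group mul inv one)
  (hcard : ~ ([set: nat -> bool] #<= coprime_commutators mul inv one))
  (x : G) (H : set G) (hH : closed_subgroup mul inv one H)
  (hpi : forall p : nat, ~ (pi_elt mul inv one x p /\ pi_set mul inv one H p)) :
  finite_index mul inv one H (centralizer_in mul H x).
Proof. exact: (@main_aux G mul inv one hG hcard x H hH hpi). Qed.
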